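(* Let $H$ be a set of pairwise disjoint half-open intervals of $\mathbb{R}$. Let $m_1,\dots,m_I$ be distinct interval-domain monomials with $\mathrm{supp}\,m_i\in H$ for all $i\in[I]$, let $g_1,\dots,g_J$ be distinct Gaussian density functions, and let $e_1,\dots,e_K$ be distinct exponential density functions. Then the set $\{m_1,\dots,m_I,g_1,\dots,g_J,e_1,\dots,e_K\}$ is linearly independent in $\mathcal{L}_1(\mathbb{R},\lambda_{\mathit{Leb}})$.
   Context: An interval-domain monomial is a function $x\mapsto x^k\chi_{[a,b)}(x)$ with $k\in\mathbb{N}\cup\{0\}$ and $a<b$, where $\chi_E$ is the characteristic function of $E$; $\mathrm{supp}\,f=\{x\mid f(x)>0\}$. A Gaussian density function is $x\mapsto\frac{1}{\sigma\sqrt{2\pi}}\exp\left(-\frac{(x-\mu)^2}{2\sigma^2}\right)$ with $\mu\in\mathbb{R}$, $\sigma>0$. An exponential density function is $x\mapsto\lambda e^{-\lambda x}\chi_{[0,\infty)}(x)$ with $\lambda>0$. $\mathcal{L}_1(\mathbb{R},\lambda_{\mathit{Leb}})$ is the space of Lebesgue-integrable functions modulo equality almost everywhere. *)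

(* Defs.v *)
From HB Require Import structures.
From mathcomp Require Import all_boot all_order all_algebra.
From mathcomp Require Import all_classical all_reals all_analysis.
Set Implicit Arguments. Unset Strict Implicit. Unset Printing Implicit Defensive.
Import Order.TTheory GRing.Theory Num.Theory.
Import numFieldNormedType.Exports.
Local Open Scope classical_set_scope.
Local Open Scope ring_scope.

Definition chi {R : realType} (E : set R) (x : R) : R :=
  if `[< E x >] then 1 else 0.

(* supp f = {x | f x > 0} (convention of the paper) *)
Definition supp {R : realType} (f : R -> R) : set R := [set x | 0 < f x].

(* Interval-domain monomial x |-> x^k chi_[a,b)(x)  (a < b required separately) *)
Definition imono {R : realType} (k : nat) (a b : R) (x : R) : R :=
  x ^+ k * chi [set` `[a, b[] x.

Definition gauss {R : realType} (mu sigma : R) (x : R) : R :=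
  (sigma * Num.sqrt (2 * pi))^-1 * expR (- ((x - mu) ^+ 2) / (2 * sigma ^+ 2)).

Definition expdens {R : realType} (lam : R) (x : R) : R :=
  lam * expR (- (lam * x)) * chi [set` `[0, +oo[] x.

Definition half_open_interval {R : realType} (h : set R) : Prop :=
  exists c d : R, c < d /\ h = [set` `[c, d[].

(* Main.v *)
Require Import Defs.
From HB Require Import structures.
From mathcomp Require Import all_boot all_order all_algebra.
From mathcomp Require Import all_classical all_reals all_analysis.
From mathcomp Require Import ring lra.
Import Order.TTheory GRing.Theory Num.Theory.
Import numFieldNormedType.Exports.
Local Open Scope classical_set_scope.
Local Open Scope ring_scope.

Section Aux.
Context {R : realType}.

Lemma ae_ptwise (f g : R -> R) (c d : R) :
  {ae (@lebesgue_measure R), forall x : R, f x = 0} ->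
  (forall x, c < x < d -> f x = g x) ->
  (forall x, c < x < d -> {for x, continuous g}) ->
  forall x, c < x < d -> g x = 0.
Proof.
move=> [N [mN N0 sN]] fg gc x0 /andP[cx xd].
apply/eqP; apply/negP => /negP g0.
have := gc x0; rewrite cx xd => /(_ isT) gcx.
have : \forall y \near x0, g y != 0.
  move/cvgrPdist_lt : gcx => /(_ `|g x0|); rewrite normr_gt0 => /(_ g0).
  apply: filterS => y; apply: contraTneq => ->.
  by rewrite subr0 ltxx.
move=> /nbhs_ballP[e /= e0 He].
set u := Num.max c (x0 - e). set v := Num.min d (x0 + e).
have uv : u < v.
  rewrite /u /v gt_max !lt_min; apply/andP; split; apply/andP; split.
  - exact: (lt_trans cx xd).
  - by rewrite (lt_trans cx)// ltrDl.
  - by rewrite (lt_trans _ xd)// gtrBl.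
  - rewrite -subr_gt0 (_ : x0 + e - (x0 - e) = e + e); first by rewrite addr_gt0.
    by ring.
have : (lebesgue_measure ([set` `]u, v[] : set R) <= lebesgue_measure N)%E.
  apply: le_measure; rewrite ?inE //.
  move=> y /=; rewrite in_itv /= => /andP[uy yv]. apply: sN => /=.
  move: uy yv; rewrite /u /v gt_max lt_min => /andP[cy ey] /andP[yd ye].
  rewrite fg ?cy ?yd //; apply/eqP; apply: He.
  by rewrite ball_itv /= in_itv /= ey ye.
rewrite N0 lebesgue_measure_itv /= lte_fin uv -EFinD lee_fin subr_le0 => vu.
by move: uv; rewrite ltNge vu.
Qed.

Lemma expR_cvg0 (f : R -> R) (del : R) : 0 < del ->
  (\forall x \near +oo, f x <= - (del * x)) -> expR (f x) @[x --> +oo] --> 0.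
Proof.
move=> d0 Hf; apply/cvgrPdist_le => e e0; near=> x.
rewrite sub0r normrN ger0_norm; last exact: expR_ge0.
apply: (@le_trans _ _ (expR (- (del * x)))).
  by rewrite ler_expR; near: x.
rewrite expRN -[leRHS]invrK lef_pV2 ?posrE ?expR_gt0 ?invr_gt0//.
rewrite (le_trans _ (expR_ge1Dx _))// -lerBlDl -ler_pdivrMl //.
Unshelve. all: end_near. Qed.

Lemma quad_cvg0 (a b : R) : (a < 0) \/ (a = 0 /\ b < 0) ->
  expR (a * x ^+ 2 + b * x) @[x --> +oo] --> 0.
Proof.
case=> [a0|[-> b0]].
  apply: (@expR_cvg0 _ 1) => //; near=> x.
  have x0 : 0 <= x by near: x; apply: nbhs_pinfty_ge; exact: num_real.
  have hx : b + 1 <= x * (- a).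
    by rewrite -ler_pdivrMr ?oppr_gt0 //.
  nra.
apply: (@expR_cvg0 _ (- b)); first by rewrite oppr_gt0.
near=> x; by rewrite mul0r add0r mulNr opprK.
Unshelve. all: end_near. Qed.

Lemma fin_argmax (T : finType) (P : pred T) (F : T -> R) t0 : P t0 ->
  exists2 t, P t & forall s, P s -> F s <= F t.
Proof. by move=> Pt0; case: (arg_maxP F Pt0) => t Pt Ht; exists t. Qed.

Lemma exp_quad_indep (T : finType) (c A B : T -> R) :
  (forall t s, A t = A s -> B t = B s -> t = s) ->
  (\forall x \near +oo, \sum_t c t * expR (A t * x ^+ 2 + B t * x) = 0) ->
  forall t, c t = 0.
Proof.
move=> inj H t; apply: contrapT => /eqP ct.
have [t1 P1 H1] := @fin_argmax T (fun t => c t != 0) A t ct.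
have Pt1 : (c t1 != 0) && (A t1 == A t1) by rewrite P1 eqxx.
have [t0 /andP[P0 /eqP A01] H0] :=
  @fin_argmax T (fun t => (c t != 0) && (A t == A t1)) B t1 Pt1.
pose r x := \sum_t c t * expR ((A t - A t0) * x ^+ 2 + (B t - B t0) * x).
have r0 : r x @[x --> +oo] --> 0.
  apply: cvg_near_cst; near=> x.
  have := near H x; rewrite /r => S.
  transitivity (expR (- (A t0 * x ^+ 2 + B t0 * x)) *
     \sum_t c t * expR (A t * x ^+ 2 + B t * x)); last by rewrite S ?mulr0.
  rewrite mulr_sumr; apply: eq_bigr => s _.
  rewrite [RHS]mulrCA -expRD; congr (_ * expR _); ring.
have rc : r x @[x --> +oo] --> \sum_t (if t == t0 then c t0 else 0).
  apply: (@cvg_big _ _ +%R 0 xpredT add_continuous) => s _.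
  case: (eqVneq s t0) => [->|st0].
    apply: cvg_near_cst; near=> x.
    by rewrite !subrr !mul0r addr0 expR0 mulr1.
  have [cs0|csn0] := eqVneq (c s) 0.
    by apply: cvg_near_cst; near=> x; rewrite cs0 mul0r.
  rewrite -(mulr0 (c s)); apply: cvgMl_tmp; apply: quad_cvg0.
  have := H1 s csn0; rewrite -A01 le_eqVlt => /orP[/eqP As|As]; last first.
    by left; rewrite subr_lt0.
  right; split; first by rewrite As subrr.
  rewrite subr_lt0 lt_neqAle; apply/andP; split.
    by apply/eqP => Bs; apply: (negP st0); apply/eqP; apply: inj.
  by apply: H0; rewrite csn0 As A01 eqxx.
rewrite -big_mkcond /= big_pred1_eq in rc.
by move/negP: P0; apply; apply/eqP; apply: (cvg_unique _ rc r0).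
Unshelve. all: end_near. Qed.


Lemma imono_in {k : nat} {a b x : R} : 0 < imono k a b x ->
  imono k a b x = x ^+ k /\ a <= x < b.
Proof.
rewrite /imono /chi; case: asboolP => [|_]; last by rewrite mulr0 ltxx.
by rewrite /= in_itv /= => /andP[ax xb]; rewrite mulr1 ax xb.
Qed.

Lemma imono_ab {k : nat} {a b x : R} : a <= x < b -> imono k a b x = x ^+ k.
Proof.
move=> h; rewrite /imono /chi; case: asboolP => [|]; first by rewrite mulr1.
by rewrite /= in_itv /= h.
Qed.

Lemma imono_ge0 (k : nat) (a b : R) : half_open_interval (supp (imono k a b)) ->
  forall x, 0 <= imono k a b x.
Proof.
move=> [c [d [cd hs]]] x0; rewrite leNgt; apply/negP => x0neg.
have x0in : a <= x0 < b.
  move: x0neg; rewrite /imono /chi; case: asboolP => [|_]; last by rewrite mulr0 ltxx.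
  by rewrite /= in_itv.
rewrite (imono_ab x0in) in x0neg.
have x0n : x0 < 0.
  by rewrite ltNge; apply/negP => /(exprn_ge0 k); rewrite leNgt x0neg.
have cs : supp (imono k a b) c by rewrite hs /= in_itv /= lexx cd.
have [ck cin] := imono_in cs.
move: cs; rewrite /supp /= ck => cpos.
have c0 : 0 < c.
  rewrite ltNge; apply/negP; rewrite le_eqVlt => /orP[/eqP c0|cn].
    move: cpos x0neg; rewrite c0; case: (k) => [|k']; last by rewrite expr0n ltxx.
    by rewrite !expr0 ltr10.
  have e1 : x0 ^+ k = (-1) ^+ k * (- x0) ^+ k by rewrite -exprNn opprK.
  have e2 : c ^+ k = (-1) ^+ k * (- c) ^+ k by rewrite -exprNn opprK.
  have p1 : 0 < (- x0) ^+ k by rewrite exprn_gt0 // oppr_gt0.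
  have p2 : 0 < (- c) ^+ k by rewrite exprn_gt0 // oppr_gt0.
  rewrite e1 in x0neg; rewrite e2 in cpos.
  have s1 : (-1) ^+ k < 0 :> R by rewrite -(pmulr_rlt0 _ p1) mulrC.
  have : 0 < (-1) ^+ k :> R by rewrite -(pmulr_rgt0 _ p2) mulrC.
  by rewrite ltNge (ltW s1).
have yin : a <= c / 2 < b.
  move: x0in cin => /andP[ax0 _] /andP[_ cb].
  apply/andP; split; first by lra.
  by lra.
have : supp (imono k a b) (c / 2).
  by rewrite /supp /= (imono_ab yin) exprn_gt0 // divr_gt0.
rewrite hs /= in_itv /= => /andP[cc _]; lra.
Qed.

Lemma imono_out (k : nat) (a b x : R) : half_open_interval (supp (imono k a b)) ->
  ~ supp (imono k a b) x -> imono k a b x = 0.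
Proof.
move=> /imono_ge0 /(_ x); rewrite le_eqVlt => /orP[/eqP <- //|h]; by [].
Qed.

Lemma imono_eqfun (k : nat) (a b a' b' : R) :
  half_open_interval (supp (imono k a b)) ->
  supp (imono k a b) = supp (imono k a' b') ->
  imono k a b = imono k a' b'.
Proof.
move=> hh hs; have hh' := hh; rewrite hs in hh'.
apply/funext => x; case: (pselect (supp (imono k a b) x)) => h.
  have h' := h; rewrite hs in h'.
  by rewrite (imono_in h).1 (imono_in h').1.
have h' := h; rewrite hs in h'.
by rewrite !imono_out.
Qed.

Lemma poly_itv_eq0 (p : {poly R}) (c d : R) : c < d ->
  (forall x, c < x < d -> p.[x] = 0) -> p = 0.
Proof.
move=> cd Hp.
pose f (i : nat) := c + (d - c) / (i.+2)%:R.
apply: (@roots_geq_poly_eq0 _ p [seq f i | i <- iota 0 (size p)]).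
- apply/allP => y /mapP[i _ ->]; apply/eqP; apply: Hp.
  have dc : 0 < d - c by rewrite subr_gt0.
  have n1 : 1 < (i.+2)%:R :> R by rewrite ltr1n.
  have q0 : 0 < (d - c) / (i.+2)%:R by rewrite divr_gt0 // ltr0n.
  have q1 : (d - c) / (i.+2)%:R < d - c.
    by rewrite ltr_pdivrMr ?ltr0n // ltr_pMr.
  rewrite /f; move: q0 q1; set q := (d - c) / _ => q0 q1.
  apply/andP; split; lra.
- rewrite map_inj_uniq ?iota_uniq // => i j; rewrite /f => /addrI.
  have dc : d - c != 0 by rewrite subr_eq0 gt_eqF.
  by move/(mulfI dc)/invr_inj/eqP; rewrite eqr_nat => /eqP [].
- by rewrite size_map size_iota.
Qed.

Lemma imono_geb (k : nat) (a b x : R) : b <= x -> imono k a b x = 0.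
Proof.
move=> bx; rewrite /imono /chi; case: asboolP => [|_]; last by rewrite mulr0.
by rewrite /= in_itv /= => /andP[_ xb]; move: bx; rewrite leNgt xb.
Qed.

Lemma expdens_pos (l x : R) : 0 <= x -> expdens l x = l * expR (0 * x ^+ 2 + (- l) * x).
Proof.
move=> x0; rewrite /expdens /chi; case: asboolP => [_|]; last by rewrite /= in_itv /= x0.
by rewrite mulr1 mul0r add0r mulNr.
Qed.

Lemma gauss_eq (m s x : R) : 0 < s ->
  gauss m s x = ((s * Num.sqrt (2 * pi))^-1 * expR (- (m ^+ 2) / (2 * s ^+ 2))) *
     expR (- (2 * s ^+ 2)^-1 * x ^+ 2 + m / s ^+ 2 * x).
Proof.
move=> s0; rewrite /gauss -mulrA -expRD; congr (_ * expR _).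
have : s != 0 by rewrite gt_eqF.
move=> sn0; field; rewrite sn0 //.
Qed.

Lemma cont_quad (c A B : R) : continuous (fun x : R => c * expR (A * x ^+ 2 + B * x)).
Proof.
move=> x; apply: cvgMl_tmp.
apply: continuous_comp; last exact: continuous_expR.
apply: cvgD; apply: cvgMl_tmp; last exact: cvg_id.
rewrite expr2; apply: cvgM; exact: cvg_id.
Qed.
End Aux.

Theorem lemma14 (R : realType) (H : set (set R)) (I J K : nat)
  (km : 'I_I -> nat) (am bm : 'I_I -> R)
  (mu sg : 'I_J -> R) (lam : 'I_K -> R) :
  (forall h, H h -> half_open_interval h) ->
  (forall h1 h2, H h1 -> H h2 -> h1 <> h2 -> h1 `&` h2 = set0) ->
  (forall i, am i < bm i) ->
  (forall i, H (supp (imono (km i) (am i) (bm i)))) ->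
  injective (fun i => imono (km i) (am i) (bm i)) ->
  (forall j, 0 < sg j) ->
  injective (fun j => gauss (mu j) (sg j)) ->
  (forall k, 0 < lam k) ->
  injective (fun k => expdens (lam k)) ->
  forall (alpha : 'I_I -> R) (beta : 'I_J -> R) (gamma : 'I_K -> R),
    {ae (@lebesgue_measure R), forall x : R,
       \sum_(i < I) alpha i * imono (km i) (am i) (bm i) x
     + \sum_(j < J) beta j * gauss (mu j) (sg j) x
     + \sum_(k < K) gamma k * expdens (lam k) x = 0} ->
    (forall i, alpha i = 0) /\ (forall j, beta j = 0) /\ (forall k, gamma k = 0).
Proof.
move=> hH hdisj hab hsupp injm hsg injg hlam inje alpha beta gamma hae.
pose T := ('I_J + 'I_K)%type.
pose c (t : T) := match t with
  | inl j => beta j * ((sg j * Num.sqrt (2 * pi))^-1 * expR (- (mu j ^+ 2) / (2 * sg j ^+ 2)))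
  | inr k => gamma k * lam k end.
pose A (t : T) := match t with
  | inl j => - (2 * sg j ^+ 2)^-1 | inr k => 0 end.
pose B (t : T) := match t with
  | inl j => mu j / sg j ^+ 2 | inr k => - lam k end.
pose g x := \sum_t c t * expR (A t * x ^+ 2 + B t * x).
pose M := \sum_i `|bm i|.
have M0 : 0 <= M by apply: sumr_ge0.
have bM i : bm i <= M.
  rewrite (le_trans (ler_norm _))// /M (bigD1 i) //= lerDl.
  by apply: sumr_ge0.
have fg x : M < x ->
     \sum_(i < I) alpha i * imono (km i) (am i) (bm i) x
     + \sum_(j < J) beta j * gauss (mu j) (sg j) x
     + \sum_(k < K) gamma k * expdens (lam k) x = g x.
  move=> xM; rewrite big1 ?add0r; last first.
    by move=> i _; rewrite imono_geb ?mulr0 // (le_trans (bM i)) // ltW.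
  rewrite /g big_sumType /=; congr (_ + _); apply: eq_bigr => j _ /=.
    by rewrite gauss_eq // mulrA.
  by rewrite expdens_pos ?mulrA // ltW // (le_lt_trans M0).
have g0 : \forall x \near +oo, g x = 0.
  near=> x.
  have xM : M < x by near: x; apply: nbhs_pinfty_gt; exact: num_real.
  apply: (@ae_ptwise R _ g M (x + 1) hae).
  - by move=> y /andP[My _]; apply: fg.
  - move=> y _; rewrite /g.
    apply: (@continuous_big _ _ +%R 0 xpredT add_continuous) => t _.
    exact: cont_quad.
  by rewrite xM ltrDl ltr01.
have c0 : forall t, c t = 0.
  apply: (@exp_quad_indep R T c A B _ g0).
  case=> [j|k] [j'|k'] /=.
  - move=> /oppr_inj /invr_inj /(mulfI (x:=2)) hs hm.
    have s2 : sg j = sg j'.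
      apply/eqP; rewrite -(@eqrXn2 _ 2) //; first by rewrite hs //.
      + exact: ltW.
      + exact: ltW.
    have sn0 : sg j' ^+ 2 != 0 by rewrite expf_eq0 /= gt_eqF.
    move: hm; rewrite s2 => /(mulIf (invr_neq0 sn0)) hm.
    by congr inl; apply: injg => /=; rewrite s2 hm.
  - move=> /eqP; rewrite oppr_eq0 invr_eq0 mulf_eq0 expf_eq0 /= pnatr_eq0 /=.
    by rewrite gt_eqF.
  - move=> /esym/eqP; rewrite oppr_eq0 invr_eq0 mulf_eq0 expf_eq0 /= pnatr_eq0 /=.
    by rewrite gt_eqF.
  - by move=> _ /oppr_inj hl; congr inr; apply: inje => /=; rewrite hl.
have beta0 j : beta j = 0.
  move/eqP: (c0 (inl j)); rewrite /= mulf_eq0 => /orP[/eqP //|].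
  rewrite gt_eqF // mulr_gt0 ?expR_gt0 // invr_gt0 mulr_gt0 //.
  by rewrite sqrtr_gt0 mulr_gt0 // pi_gt0.
have gamma0 k : gamma k = 0.
  move/eqP: (c0 (inr k)); rewrite /= mulf_eq0 => /orP[/eqP //|].
  by rewrite gt_eqF.
split => //; move=> i0.
have [cc [d [cd hs]]] := hH _ (hsupp i0).
pose S i := `[< supp (imono (km i) (am i) (bm i)) = supp (imono (km i0) (am i0) (bm i0)) >].
pose p : {poly R} := \sum_(i | S i) alpha i *: 'X^(km i).
have p0 : p = 0.
  apply: (@poly_itv_eq0 R p cc d cd); apply: (@ae_ptwise R _ _ cc d hae).
  - move=> x /andP[cx xd].
    rewrite [X in _ + X]big1 ?addr0; last by move=> k _; rewrite gamma0 mul0r.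
    rewrite [X in _ + X]big1 ?addr0; last by move=> j _; rewrite beta0 mul0r.
    rewrite /p horner_sum [RHS]big_mkcond; apply: eq_bigr => i _.
    have xs : supp (imono (km i0) (am i0) (bm i0)) x.
      by rewrite hs /= in_itv /= (ltW cx) xd.
    rewrite /S; case: asboolP => [Si|nSi].
      rewrite hornerZ hornerXn; congr (_ * _).
      by have := xs; rewrite -Si => /imono_in [].
    rewrite imono_out ?mulr0 //; first exact: hH.
    move=> xi; have := hdisj _ _ (hsupp i) (hsupp i0) nSi.
    by move/seteqP => [/(_ x) /= h _]; apply: h.
  - by move=> x _; apply: continuous_horner.
have := congr1 (fun q : {poly R} => q`_(km i0)) p0.
rewrite /= coef0 coef_sum (bigD1 i0) /=; last by rewrite /S; apply/asboolP.
rewrite coefZ coefXn eqxx mulr1 big1 ?addr0 //.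
move=> i /andP[Si ii0]; rewrite coefZ coefXn.
case: eqP => [ki|]; last by rewrite mulr0.
exfalso; move/negP: ii0; apply; apply/eqP; apply: injm => /=.
rewrite ki; apply: imono_eqfun.
  exact: hH (hsupp i).
by move/asboolP: Si; rewrite ki.
Unshelve. all: end_near.
Qed.
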